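(* Let $n\ge 2$, $k\ge 1$, $m=2n+k$. Let $\tau,\rho$ be the automorphisms of $SG_{n,k}$ given by $\tau S=S+1$ and $\rho S=k-S$ (elementwise, arithmetic modulo $m$), and let $\bar\tau,\bar\rho$ be the automorphisms of $K_{k+2}$ given by $\bar\tau x=x+1$ and $\bar\rho x=k-x$ (arithmetic modulo $k+2$). Let $c\colon SG_{n,k}\to K_{k+2}$ be the canonical colouring. Then $c\circ\tau\sim\bar\tau\circ c$ and $c\circ\rho\sim\bar\rho\circ c$.
   Context: A subset $S\subseteq\{0,\dots,m-1\}$ is stable if $\{i,i+1\}\not\subseteq S$ for all $0\le i\le m-2$ and $\{0,m-1\}\not\subseteq S$. The stable Kneser graph $SG_{n,k}$ has as vertices the stable $n$-element subsets of $\{0,\dots,m-1\}$, two being adjacent iff they are disjoint. $K_{k+2}$ is the loopless complete graph on $\{0,\dots,k+1\}$; the canonical colouring is $c(S)=\min S$ (with $S\subseteq\{0,\dots,m-1\}$ viewed as integers). For graphs $G,H$ and maps $f,g\colon V(G)\to V(H)$, $f\sim g$ means $(f(u),g(v))\in E(H)$ for all edges $(u,v)$ of $G$ (edges are ordered pairs of a symmetric relation). *)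

(* Defs.v *)
From mathcomp Require Import all_boot.
Set Implicit Arguments. Unset Strict Implicit. Unset Printing Implicit Defensive.

Definition stable m (S : {set 'I_m}) : bool :=
  [forall i : 'I_m, forall j : 'I_m,
     ((i \in S) && (j \in S)) ==>
     ~~ ((val j == (val i).+1) || ((val i == 0) && (val j == m.-1)))].

Definition SGvert (n k : nat) (S : {set 'I_(2 * n + k)}) : bool :=
  (#|S| == n) && stable S.

Arguments SGvert : clear implicits.
Definition SGadj m (S T : {set 'I_m}) : bool := [disjoint S & T].

Definition Kadj k (x y : 'I_k.+2) : bool := x != y.

Lemma ord_pos m (i : 'I_m) : 0 < m.
Proof. by case: m i => [[]|]. Qed.

Definition succI m (i : 'I_m) : 'I_m := ordS i.
Definition reflI (a : nat) m (i : 'I_m) : 'I_m :=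
  Ordinal (ltn_pmod (a + m - val i) (ord_pos i)).

Definition tauSG n k (S : {set 'I_(2 * n + k)}) : {set 'I_(2 * n + k)} :=
  [set succI i | i in S].
Definition rhoSG n k (S : {set 'I_(2 * n + k)}) : {set 'I_(2 * n + k)} :=
  [set reflI k i | i in S].

Definition taubar k (x : 'I_k.+2) : 'I_k.+2 := succI x.
Definition rhobar k (x : 'I_k.+2) : 'I_k.+2 := reflI k x.

(* min S (as a natural number); equals the minimum for nonempty S *)
Definition minS m (S : {set 'I_m}) : nat := \big[minn/m]_(i in S) val i.

(* canonical colouring c(S) = min S, viewed in {0,..,k+1}
   (for every vertex of SG_{n,k}, min S <= k+1, so inord is exact there) *)
Definition canon (n k : nat) (S : {set 'I_(2 * n + k)}) : 'I_k.+2 := inord (minS S).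
Arguments canon : clear implicits.

Definition sim_SG_K n k (f g : {set 'I_(2 * n + k)} -> 'I_k.+2) : Prop :=
  forall S T : {set 'I_(2 * n + k)},
    SGvert n k S -> SGvert n k T -> SGadj S T -> Kadj (f S) (g T).

(* Main.v *)
Require Import Defs.
From mathcomp Require Import all_boot zify.

Lemma core L : forall x : nat -> bool, (forall i, ~~ (x i && x i.+1)) ->
  2 * \sum_(i < L) x i <= L.+1.
Proof.
elim: L {-2}L (leqnn L) => [|N IH] L hL x hx.
  by move: hL; rewrite leqn0 => /eqP ->; rewrite big_ord0.
case: L hL => [|[|L]] hL.
- by rewrite big_ord0.
- by rewrite big_ord_recl big_ord0; case: (x _).
rewrite big_ord_recl big_ord_recl /=.
have := IH L (ltnW hL) (fun i => x i.+2) (fun i => hx i.+2).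
have := hx 0; have := hx 1.
have -> : \sum_(i<L) x (bump 0 (bump 0 i)) = \sum_(i<L) x i.+2 by apply: eq_bigr => i _; rewrite /bump !leq0n.
case: (x 0); case: (x 1) => //= _ _; lia.
Qed.

Lemma count_stable m (S : {set 'I_m}) lo hi : stable S -> hi <= m ->
  (forall j, j \in S -> lo <= val j < hi) -> 2 * #|S| <= hi - lo + 1.
Proof.
move=> hS hm hr.
pose x i := [exists j in S, val j == i].
have E : #|S| = \sum_(0 <= i < m) x i.
  rewrite big_mkord -sum1_card big_mkcond /=; apply: eq_bigr => j _.
  rewrite /x; case: (boolP (j \in S)) => hj.
    by have -> : [exists j0 in S, val j0 == val j] by apply/existsP; exists j; rewrite hj eqxx.
  suff -> : [exists j0 in S, val j0 == val j] = false by []. apply/existsP => -[j' /andP [hj' /eqP e]].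
  have ej : j = j' by apply: val_inj. by rewrite ej hj' in hj.
have Z : forall i, ~~ (lo <= i < hi) -> x i = false.
  move=> i hi'; apply/existsP => -[j /andP [hj /eqP e]].
  by move: (hr j hj); rewrite e (negbTE hi').
case: (leqP lo hi) => hlh; last first.
  have -> : #|S| = 0.
    rewrite E big1_seq // => i _; rewrite Z //; apply/negP => /andP [a b]; lia.
  by [].
have Z1 : \sum_(0 <= i < lo) x i = 0.
  by apply: big1_seq => i /andP [_]; rewrite mem_index_iota => /andP [_ h]; rewrite Z //; apply/negP => /andP [a b]; lia.
have Z2 : \sum_(hi <= i < m) x i = 0.
  by apply: big1_seq => i /andP [_]; rewrite mem_index_iota => /andP [h _]; rewrite Z //; apply/negP => /andP [a b]; lia.
rewrite E (big_cat_nat (n:=hi)) // Z2 (big_cat_nat (n:=lo)) // Z1.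
rewrite ?add0n ?addn0 -{1}[lo]add0n big_addn big_mkord.
have := core (hi - lo) (fun i => x (i + lo)).
rewrite -[X in _ -> 2 * X <= _]/(0 + \sum_(i < hi - lo) x (i + lo) + 0) add0n addn0 addn1; apply=> i; apply/negP => /andP [/existsP [j /andP [hj /eqP e]] /existsP [j' /andP [hj' /eqP e']]].
move/forallP: hS => /(_ j) /forallP /(_ j') /implyP /(_ (introT andP (conj hj hj'))).
by rewrite e e' addSn eqxx.
Qed.

Lemma minS_le m (S : {set 'I_m}) j : j \in S -> minS S <= val j.
Proof.
move=> hj; rewrite /minS.
have : j \in index_enum 'I_m by rewrite mem_index_enum.
elim: (index_enum 'I_m) => [|x s IH] //; rewrite inE big_cons.
case/orP => [/eqP <-|/IH h]; first by rewrite hj geq_minl.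
by case: ifP => // _; rewrite geq_min h orbT.
Qed.

Lemma minS_mem m (S : {set 'I_m}) j0 : j0 \in S ->
  exists2 j, j \in S & val j = minS S.
Proof.
move=> h0; case: (arg_minnP (fun j : 'I_m => val j) h0) => j hj hmin.
exists j => //; apply/eqP; rewrite eqn_leq minS_le // andbT.
apply: (big_ind (fun x => val j <= x)) => //.
- exact: ltnW (ltn_ord j).
- by move=> x y hx hy; rewrite leq_min hx hy.
Qed.

Lemma reflI_val m k (i : 'I_m) : k < m ->
  val (reflI k i) = if val i <= k then k - val i else k + m - val i.
Proof.
move=> hk; rewrite /reflI /=; have hi := ltn_ord i; case: ifP => h.
  have -> : k + m - i = (k - i) + m by lia.
  by rewrite modnDr modn_small //; lia.
by rewrite modn_small //; lia.
Qed.

Section Main.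
Variables (n k : nat) (hn : 2 <= n) (hk : 1 <= k).
Local Notation m := (2 * n + k).

Lemma vmin (S : {set 'I_m}) : SGvert n k S ->
  exists2 j, j \in S & val j = minS S /\ minS S <= k.+1.
Proof.
case/andP => /eqP hc hS.
have : S != set0 by rewrite -card_gt0 hc; lia.
case/set0Pn => j0 /minS_mem [j hj ej]; exists j => //; split => //.
have := @count_stable _ _ (minS S) _ hS (leqnn m).
rewrite hc; move/(_ (fun i hi => introT andP (conj (@minS_le _ _ _ hi) (ltn_ord i)))).
lia.
Qed.

Lemma vK2 (S : {set 'I_m}) : SGvert n k S -> minS S = k.+1 ->
  exists2 j, j \in S & val j = m.-1.
Proof.
move=> hv ha; case/andP: (hv) => /eqP hc hS.
case: (boolP [exists j in S, val j == m.-1]).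
  by case/existsP => j /andP [hj /eqP e]; exists j.
move/existsPn => H.
have := @count_stable _ _ (minS S) _ hS (leq_pred m).
have : forall i, i \in S -> minS S <= val i < m.-1.
  move=> i hi; rewrite minS_le //=; have := H i; rewrite hi /= => hne.
  have := ltn_ord i; lia.
move=> h /(_ h); rewrite hc ha; lia.
Qed.

Lemma claim1 : sim_SG_K (fun S => canon n k (tauSG S)) (fun S => taubar (canon n k S)).
Proof.
move=> S T hvS hvT hST; rewrite /Kadj /canon /taubar /succI.
have hm : 0 < m by lia.
case: (vmin _ hvS) => ja hja [ea ha]; case: (vmin _ hvT) => jb hjb [eb hb].
set a := minS S in ea ha *; set b := minS T in eb hb *.
have hab : a != b.
  apply/eqP => e; have ej : ja = jb by apply: val_inj; rewrite /= ea eb.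
  by rewrite -ej (disjointFr hST hja) in hjb.
have Rv : val (ordS (inord b : 'I_k.+2)) = if b <= k then b.+1 else 0.
  rewrite /= inordK; last lia.
  case: ifP => h; first by rewrite modn_small //; lia.
  have -> : b = k.+1 by lia. by rewrite modnn.
apply/eqP => E; have := congr1 val E; rewrite Rv => {E}.
case: (boolP [exists j in S, val j == m.-1]).
- case/existsP => j /andP [hj /eqP e].
  have h0 : minS (tauSG S) = 0.
    apply/eqP; rewrite -leqn0.
    have : succI j \in tauSG S by apply: imset_f.
    move/minS_le; rewrite /succI /= e prednK // modnn //.
  rewrite h0 /= inordK //; case: ifP => // hbk _.
  have [jt hjt et] : exists2 j, j \in T & val j = m.-1 by apply: vK2 _ hvT _; lia.
  have ej : j = jt by apply: val_inj; rewrite /= e et.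
  by rewrite -ej (disjointFr hST hj) in hjt.
- move/existsPn => H.
  have sv : forall i, i \in S -> val (succI i) = (val i).+1.
    move=> i hi; rewrite /succI /= modn_small //.
    have := H i; rewrite hi /= => hne; have := ltn_ord i; lia.
  have hak : a <= k.
    case: (leqP a k) => // hk1.
    have [jt hjt et] : exists2 j, j \in S & val j = m.-1 by apply: vK2 _ hvS _; lia.
    by have := H jt; rewrite hjt et eqxx.
  have hmu : minS (tauSG S) = a.+1.
    apply/eqP; rewrite eqn_leq; apply/andP; split.
      have : succI ja \in tauSG S by apply: imset_f.
      by move/minS_le; rewrite sv // ea.
    have : succI ja \in tauSG S by apply: imset_f.
    case/minS_mem => i /imsetP [i0 hi0 ->] <-.
    by rewrite sv // ltnS; apply: minS_le.
  rewrite hmu /= inordK; last lia.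
  case: ifP => // _ [] e; by rewrite e eqxx in hab.
Qed.

Lemma claim2 : sim_SG_K (fun S => canon n k (rhoSG S)) (fun S => rhobar (canon n k S)).
Proof.
move=> S T hvS hvT hST; rewrite /Kadj /canon /rhobar.
have hkm : k < m by lia.
case: (vmin _ hvS) => ja hja [ea ha]; case: (vmin _ hvT) => jb hjb [eb hb].
set a := minS S in ea ha *; set b := minS T in eb hb *.
have hab : a != b.
  apply/eqP => e; have ej : ja = jb by apply: val_inj; rewrite /= ea eb.
  by rewrite -ej (disjointFr hST hja) in hjb.
have Rv : val (reflI k (inord b : 'I_k.+2)) = if b <= k then k - b else k.+1.
  rewrite reflI_val // /= inordK; last lia.
  case: ifP => h //; lia.
set mu := minS (rhoSG S).
have hmuup : mu <= (if a <= k then k - a else k.+1).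
  case: ifP => h.
    have : reflI k ja \in rhoSG S by apply: imset_f.
    by move/minS_le; rewrite reflI_val // ea h.
  have [jt hjt et] : exists2 j, j \in S & val j = m.-1 by apply: vK2 _ hvS _; lia.
  have : reflI k jt \in rhoSG S by apply: imset_f.
  move/minS_le; rewrite reflI_val // et.
  have -> : (m.-1 <= k) = false by apply/negbTE; lia.
  lia.
have hmu : mu <= k.+1 by move: hmuup; case: ifP => _; lia.
apply/eqP => E; have := congr1 val E; rewrite Rv /= inordK // => {E}.
case: ifP => hbk e.
- have : reflI k ja \in rhoSG S by apply: imset_f.
  case/minS_mem => i /imsetP [i0 hi0 ->]; rewrite -/mu e reflI_val //.
  case: ifP => hi0k ev.
  + have ej : i0 = jb by apply: val_inj; move: hi0k ev; rewrite /= eb; lia.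
    by rewrite -ej (disjointFr hST hi0) in hjb.
  + move: hi0k ev; rewrite /=; have := ltn_ord i0; lia.
- move: hmuup; rewrite e; case: ifP => h; first lia.
  move=> _; move: hab; have -> : a = k.+1 by lia.
  have hb1 : b = k.+1 by move/negbT: hbk; lia.
  by rewrite hb1 eqxx.
Qed.

End Main.

Theorem lemma4p5 (n k : nat) (hn : 2 <= n) (hk : 1 <= k) :
  sim_SG_K (fun S => canon n k (tauSG S)) (fun S => taubar (canon n k S)) /\
  sim_SG_K (fun S => canon n k (rhoSG S)) (fun S => rhobar (canon n k S)).
Proof. by split; [apply: claim1 | apply: claim2]. Qed.
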